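(* Let $\Lambda\in\mathbb{R}^{n\times n}$ be diagonal with entries $\lambda_{ii}\in[0,1]$, let $W^{(1)},W^{(2)}\in\mathbb{R}^{n\times n}$ be entrywise nonnegative with $W^{(1)}+W^{(2)}$ row-stochastic, and $s\in\mathbb{R}^n$. Consider the FJ-MM system $$x(t+1)=\Lambda\big(W^{(1)}x(t)+W^{(2)}x(t-1)\big)+(I-\Lambda)s \tag{A}$$ and the comparison FJ system $$x(t+1)=\bar A x(t)+(I-\Lambda)s,\qquad \bar A:=\Lambda\big(W^{(1)}+W^{(2)}\big). \tag{B}$$ The following are equivalent: (i) system (A) is exponentially stable, i.e. $\rho(\bar A_d)<1$ where $\bar A_d:=\begin{pmatrix}0 & I\\ \Lambda W^{(2)} & \Lambda W^{(1)}\end{pmatrix}\in\mathbb{R}^{2n\times 2n}$; (ii) system (B) is exponentially stable, i.e. $\rho(\bar A)<1$; (iii) the set $\hat{\mathcal V}:=\{i:\lambda_{ii}<1\}$ is non-empty and globally reachable in the directed graph $\mathcal G[W^{(1)}+W^{(2)}]$ (in particular this holds if $\lambda_{ii}<1$ for all $i$). Moreover, if (i)–(iii) hold, then $I-\bar A$ is invertible and every solution of (A) (for any initial data $x(-1),x(0)$) and every solution of (B) converges to $$\bar x=(I-\bar A)^{-1}(I-\Lambda)s,$$ which is the unique equilibrium of both systems.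
   Context: $\rho(M)$ denotes the spectral radius. For an entrywise nonnegative $n\times n$ matrix $W=(w_{ij})$, $\mathcal G[W]$ is the directed graph on nodes $\{1,\dots,n\}$ with an edge $(i,j)$ iff $w_{ij}>0$. A set of nodes $S$ is globally reachable if from every node there is a directed walk (possibly of length zero) to some node of $S$. System (A) is equivalent to $y(t)=\bar A_d y(t-1)+\begin{pmatrix}0\\(I-\Lambda)s\end{pmatrix}$ with $y(t-1)=(x(t-1)^\top,x(t)^\top)^\top$. *)

(* Defs.v *)
From HB Require Import structures.
From mathcomp Require Import all_boot all_order all_algebra.
From mathcomp Require Import all_classical all_reals all_analysis.
From mathcomp Require complex.
Import complex.ComplexField.
Set Implicit Arguments. Unset Strict Implicit. Unset Printing Implicit Defensive.
Import Order.TTheory GRing.Theory Num.Theory.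
Local Open Scope ring_scope.

Definition complexify (R : realType) (m n : nat) (A : 'M[R]_(m, n))
  : 'M[complex.complex R]_(m, n) :=
  map_mx (fun x : R => complex.Complex x 0) A.

Definition spectral_radius_lt1 (R : realType) (n : nat) (A : 'M[R]_n) : Prop :=
  forall z : complex.complex R, eigenvalue (complexify A) z -> `|z| < 1.

Definition graph_edge (R : realType) (n : nat) (W : 'M[R]_n) : rel 'I_n :=
  fun i j => 0 < W i j.

Definition globally_reachable (R : realType) (n : nat) (W : 'M[R]_n)
  (S : pred 'I_n) : Prop :=
  forall i : 'I_n, exists2 j, S j & connect (graph_edge W) i j.

Definition nonneg_mx (R : realType) (n : nat) (W : 'M[R]_n) : Prop :=
  forall i j, 0 <= W i j.

Definition row_stochastic (R : realType) (n : nat) (W : 'M[R]_n) : Prop :=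
  nonneg_mx W /\ forall i, \sum_j W i j = 1.

Definition FJMM_mx (R : realType) (n : nat) (Lam W1 W2 : 'M[R]_n) : 'M[R]_(n + n) :=
  block_mx 0 1%:M (Lam *m W2) (Lam *m W1).

(* Main.v *)
Require Import Defs.
From HB Require Import structures.
From mathcomp Require Import all_boot all_order all_algebra.
From mathcomp Require Import all_classical all_reals all_analysis.
From mathcomp Require Import complex.
Import Order.TTheory GRing.Theory Num.Theory numFieldNormedType.Exports.
Local Open Scope classical_set_scope.
Local Open Scope ring_scope.
Import complex.ComplexField.
Set Implicit Arguments. Unset Strict Implicit. Unset Printing Implicit Defensive.


Lemma eigenvalue_unitE (F : fieldType) (N : nat) (A : 'M[F]_N) (a : F) :
  eigenvalue A a = (A - a%:M \notin unitmx).
Proof. by rewrite /eigenvalue /eigenspace kermx_eq0 row_free_unit. Qed.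

Lemma eigen_right (F : fieldType) (N : nat) (A : 'M[F]_N) (a : F) :
  eigenvalue A a -> exists2 x : 'cV[F]_N, A *m x = a *: x & x != 0.
Proof.
rewrite eigenvalue_unitE -unitmx_tr => H.
have : eigenvalue A^T a.
  rewrite eigenvalue_unitE.
  have -> : A^T - a%:M = (A - a%:M)^T by rewrite linearB /= tr_scalar_mx.
  exact: H.
move/eigenvalueP=> [v Hv v0]; exists v^T; last by rewrite trmx_eq0.
by rewrite -[A]trmxK -trmx_mul Hv linearZ.
Qed.

Lemma right_eigen (F : fieldType) (N : nat) (A : 'M[F]_N) (a : F) (x : 'cV[F]_N) :
  A *m x = a *: x -> x != 0 -> eigenvalue A a.
Proof.
move=> Hx x0; rewrite eigenvalue_unitE; apply/negP => U.
have : (A - a%:M) *m x = 0 by rewrite mulmxBl Hx mul_scalar_mx subrr.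
move/(congr1 (mulmx (invmx (A - a%:M)))); rewrite mulKmx // mulmx0 => E.
by move: x0; rewrite E eqxx.
Qed.

Section Real.
Variable R : realType.
Local Notation C := (complex.complex R).
Local Notation toC := (complex.real_complex R).

Lemma complexifyE N (A : 'M[R]_N) : complexify A = map_mx toC A.
Proof. by []. Qed.

Lemma eigen_complexify N (A : 'M[R]_N) a :
  eigenvalue A a -> eigenvalue (complexify A) (toC a).
Proof.
rewrite !eigenvalue_unitE complexifyE.
have -> : map_mx toC A - (toC a)%:M = map_mx toC (A - a%:M).
  by rewrite map_mxB /= map_scalar_mx.
by rewrite map_unitmx.
Qed.

Lemma complexify_exp N (A : 'M[R]_N) k :
  complexify (A ^+ k) = complexify A ^+ k.
Proof.
rewrite !complexifyE; elim: k => [|k IH]; first by rewrite !expr0 map_mx1.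
by rewrite !exprS -!mulmxE map_mxM IH.
Qed.

Lemma exp_eigvec N (B : 'M[C]_N) z (x : 'cV[C]_N) k :
  B *m x = z *: x -> B ^+ k *m x = z ^+ k *: x.
Proof.
move=> H; elim: k => [|k IH]; first by rewrite !expr0 mul1mx scale1r.
by rewrite exprSr -mulmxE -mulmxA H -scalemxAr IH scalerA -exprS.
Qed.

End Real.


Section Real2.
Variable R : realType.
Local Notation C := (complex.complex R).
Local Notation toC := (complex.real_complex R).

Lemma exists_max (T : finType) (t0 : T) (f : T -> R) : exists i, forall j, f j <= f i.
Proof. by case: (@arg_maxP _ _ T t0 xpredT f isT) => i _ H; exists i => j; apply: H. Qed.

Lemma toC_ge0 {r : R} : 0 <= r -> (0 : C) <= toC r.
Proof. by move=> H; rewrite -(rmorph0 toC) complex.lecR. Qed.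

Lemma toC_lt1 {r : R} : r < 1 -> toC r < (1 : C).
Proof. by move=> H; rewrite -(rmorph1 toC) complex.ltcR. Qed.

Lemma normC_le (a b : C) : Normc.normc a <= Normc.normc b -> `|a| <= `|b|.
Proof. by move=> H; rewrite complex.lecR. Qed.

Lemma F1 N (M : 'M[R]_N) (x : 'cV[C]_N) z :
  (forall i j, 0 <= M i j) ->
  (forall i, (M *m (const_mx 1 : 'cV[R]_N)) i 0 < 1) ->
  complexify M *m x = z *: x -> x != 0 -> `|z| < 1.
Proof.
move=> Mge0 Mlt Hx x0.
case: N M x Mge0 Mlt Hx x0 => [|N] M x Mge0 Mlt Hx x0.
  have x00 : x = 0 by apply/matrixP => -[m Hm]; exfalso; by rewrite ltn0 in Hm.
  by rewrite x00 eqxx in x0.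
have [i0 Hi0] := @exists_max _ ord0 (fun i => Normc.normc (x i 0)).
have Hm : forall j, `|x j 0| <= `|x i0 0| by move=> j; apply: normC_le.
have xi0 : 0 < `|x i0 0|.
  rewrite normr_gt0; apply: contra x0 => /eqP E; apply/eqP/matrixP => i j.
  rewrite (ord1 j) mxE; apply/eqP; rewrite -normr_le0; apply: le_trans (Hm i) _; by rewrite E normr0.
have Ms : forall i, (M *m (const_mx 1 : 'cV[R]_N.+1)) i 0 = \sum_j M i j.
  by move=> i; rewrite mxE; apply: eq_bigr => j _; rewrite mxE mulr1.
rewrite -(ltr_pM2r xi0) mul1r -normrM.
have -> : z * x i0 0 = (complexify M *m x) i0 0 by rewrite Hx mxE.
rewrite mxE; apply: (le_lt_trans (ler_norm_sum _ _ _)).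
apply: (@le_lt_trans _ _ (\sum_j toC (M i0 j) * `|x i0 0|)).
  apply: ler_sum => j _; rewrite mxE normrM (ger0_norm (toC_ge0 (Mge0 _ _))).
  by apply: ler_wpM2l; [apply: toC_ge0 | apply: Hm].
rewrite -mulr_suml -rmorph_sum -{2}(mul1r `|x i0 0|) ltr_pM2r //.
by apply: toC_lt1; rewrite -Ms.
Qed.

End Real2.


Section Real3.
Variable R : realType.
Local Notation C := (complex.complex R).
Local Notation toC := (complex.real_complex R).
Local Notation one N := (const_mx 1 : 'cV[R]_N).

Definition nnm {m p} (A : 'M[R]_(m, p)) := forall i j, 0 <= A i j.

Lemma nnm_mul m p q (A : 'M[R]_(m, p)) (B : 'M[R]_(p, q)) :
  nnm A -> nnm B -> nnm (A *m B).
Proof. by move=> HA HB i j; rewrite mxE sumr_ge0 // => k _; rewrite mulr_ge0. Qed.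

Lemma nnm_exp N (A : 'M[R]_N) k : nnm A -> nnm (A ^+ k).
Proof.
move=> HA; elim: k => [|k IH]; first by move=> i j; rewrite expr0 mxE ler0n.
by rewrite exprS -mulmxE; apply: nnm_mul.
Qed.

Lemma contr N (M : 'M[R]_N) : nnm M ->
  (exists K, forall i, (M ^+ K *m one N) i 0 < 1) -> spectral_radius_lt1 M.
Proof.
move=> HM [K HK] z /eigen_right [x Hx x0].
have := exp_eigvec K Hx; rewrite -complexify_exp => HxK.
have := F1 (nnm_exp K HM) HK HxK x0; rewrite normrX => H.
rewrite real_ltNge ?normr_real ?real1 //; apply/negP => H1.
by move: H; rewrite real_ltNge ?realX ?normr_real ?real1 // exprn_ege1.
Qed.

Lemma ord_neq (N : nat) (i k : 'I_N) : k != i -> (i != k :> nat).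
Proof. by rewrite eq_sym. Qed.

Lemma diagM N p (Lam : 'M[R]_N) (B : 'M[R]_(N, p)) i j :
  is_diag_mx Lam -> (Lam *m B) i j = Lam i i * B i j.
Proof.
move=> /is_diag_mxP HD; rewrite mxE (bigD1 i) //= big1 ?addr0 //.
by move=> k Hk; rewrite HD ?mul0r // ord_neq.
Qed.

End Real3.


Section Reach.
Variable R : realType.
Local Notation one N := (const_mx 1 : 'cV[R]_N).
Variables (n : nat) (Lam W : 'M[R]_n).
Hypothesis HD : is_diag_mx Lam.
Hypothesis HL : forall i, 0 <= Lam i i <= 1.
Hypothesis HW : forall i j, 0 <= W i j.
Hypothesis HS : forall i, \sum_j W i j = 1.
Local Notation A := (Lam *m W).

Lemma Lam_ge0 i : 0 <= Lam i i. Proof. by case/andP: (HL i). Qed.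
Lemma Lam_le1 i : Lam i i <= 1. Proof. by case/andP: (HL i). Qed.

Lemma A_nn : nnm A.
Proof. by move=> i j; rewrite diagM // mulr_ge0 ?Lam_ge0. Qed.

Lemma A_mulE (v : 'cV[R]_n) i : (A *m v) i 0 = Lam i i * \sum_j W i j * v j 0.
Proof.
rewrite -mulmxA diagM //; congr (_ * _); by rewrite mxE.
Qed.

Definition u k := A ^+ k *m one n.

Lemma uS k : u k.+1 = A *m u k.
Proof. by rewrite /u exprS -mulmxE mulmxA. Qed.

Lemma u_bnd k i : 0 <= u k i 0 <= 1.
Proof.
elim: k i => [|k IH] i; first by rewrite /u expr0 mul1mx mxE ler01 lexx.
rewrite uS A_mulE; apply/andP; split.
  by rewrite mulr_ge0 ?Lam_ge0 // sumr_ge0 // => j _; rewrite mulr_ge0 //; case/andP: (IH j).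
have Hs : \sum_j W i j * u k j 0 <= 1.
  rewrite -(HS i); apply: ler_sum => j _; rewrite -{2}(mulr1 (W i j)).
  by apply: ler_wpM2l => //; case/andP: (IH j).
apply: le_trans (Lam_le1 i); rewrite -{2}(mulr1 (Lam i i)).
by apply: ler_wpM2l; rewrite ?Lam_ge0.
Qed.

Fixpoint Rk (k : nat) (i : 'I_n) : Prop :=
  Lam i i < 1 \/ (if k is k'.+1 then exists j, 0 < W i j /\ Rk k' j else False).

Lemma Rk_u k i : Rk k i -> forall m, (k < m)%N -> u m i 0 < 1.
Proof.
elim: k i => [|k IH] i Hk [|m] //= Hm; rewrite uS A_mulE.
- case: Hk => // Hl.
  apply: (le_lt_trans _ Hl); rewrite -{2}(mulr1 (Lam i i)); apply: ler_wpM2l; rewrite ?Lam_ge0 //.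
  rewrite -(HS i); apply: ler_sum => j _; rewrite -{2}(mulr1 (W i j)).
  by apply: ler_wpM2l => //; case/andP: (u_bnd m j).
have Hs1 : \sum_j W i j * u m j 0 <= 1.
  rewrite -(HS i); apply: ler_sum => j _; rewrite -{2}(mulr1 (W i j)).
  by apply: ler_wpM2l => //; case/andP: (u_bnd m j).
case: Hk => [Hl|[j [Wj Hj]]].
  apply: (le_lt_trans _ Hl); rewrite -{2}(mulr1 (Lam i i)); apply: ler_wpM2l; rewrite ?Lam_ge0 //.
have Hs : \sum_j W i j * u m j 0 < 1.
  rewrite -(HS i) (bigD1 j) //= [X in _ < X](bigD1 j) //=.
  apply: ltr_leD.
    by rewrite -{2}(mulr1 (W i j)) ltr_pM2l // IH.
  apply: ler_sum => l _; rewrite -{2}(mulr1 (W i l)).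
  by apply: ler_wpM2l => //; case/andP: (u_bnd m l).
apply: (le_lt_trans _ Hs); rewrite -{2}(mul1r (\sum_j _)); apply: ler_wpM2r; rewrite ?Lam_le1 //.
by rewrite sumr_ge0 // => l _; rewrite mulr_ge0 //; case/andP: (u_bnd m l).
Qed.

Lemma conn_Rk i j : connect (graph_edge W) i j -> Lam j j < 1 -> exists k, Rk k i.
Proof.
move=> /connectP [p Hp ->]; elim: p i Hp => [|j' p IH] i /= Hp Hl.
  by exists 0%N; left.
case/andP: Hp => Hij Hp; have [k Hk] := IH _ Hp Hl.
by exists k.+1; right; exists j'; split.
Qed.

Lemma reach_u : globally_reachable W (fun i => Lam i i < 1) ->
  exists K, forall i, u K i 0 < 1.
Proof.
move=> HG.
have Hall : forall s : seq 'I_n, exists K, forall i, i \in s -> forall m, (K <= m)%N -> u m i 0 < 1.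
  elim => [|i s [K HK]]; first by exists 0%N.
  have [j Sj Cj] := HG i; have [k Hk] := conn_Rk Cj Sj.
  exists (maxn K k.+1) => l; rewrite inE => /orP [/eqP -> | Hl] m Hm.
    by apply: (Rk_u Hk); apply: leq_trans Hm; rewrite leq_maxr.
  by apply: HK => //; apply: leq_trans Hm; rewrite leq_maxl.
have [K HK] := Hall (enum 'I_n); exists K => i; apply: HK => //; by rewrite mem_enum.
Qed.

End Reach.


Section NotReach.
Variable R : realType.
Variables (n : nat) (Lam W : 'M[R]_n).
Hypothesis HD : is_diag_mx Lam.
Hypothesis HL : forall i, 0 <= Lam i i <= 1.
Hypothesis HW : forall i j, 0 <= W i j.
Hypothesis HS : forall i, \sum_j W i j = 1.
Local Notation A := (Lam *m W).

Lemma sum_delta (w : 'rV[R]_n) j : \sum_i w 0 i * (i == j)%:R = w 0 j.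
Proof.
by rewrite (bigD1 j) //= eqxx mulr1 big1 ?addr0 // => i /negPf ->; rewrite mulr0.
Qed.

Lemma not_reach : ~ globally_reachable W (fun i => Lam i i < 1) ->
  exists2 q : 'rV[R]_n, q *m A = q & q != 0.
Proof.
move=> NG.
have [i0 Hi0] : exists i0, ~ (exists2 j, Lam j j < 1 & connect (graph_edge W) i0 j).
  by apply/existsNP.
pose Cs := [pred j | connect (graph_edge W) i0 j].
have CL : forall j, j \in Cs -> Lam j j = 1.
  move=> j Cj; have := Lam_le1 HL j; rewrite le_eqVlt => /orP [/eqP //|Hl].
  by exfalso; apply: Hi0; exists j.
have CW : forall j k, j \in Cs -> k \notin Cs -> W j k = 0.
  move=> j k Cj Ck; have := HW j k; rewrite le_eqVlt => /orP [/eqP //|Hl].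
  move: Ck; rewrite inE (connect_trans Cj) //; by apply: connect1.
have CA : forall j k, j \in Cs -> k \notin Cs -> A j k = 0.
  by move=> j k Cj Ck; rewrite diagM // CW // mulr0.
pose Q : 'M[R]_n := \matrix_(i, j) if i \in Cs then A i j - (i == j)%:R else (i == j)%:R.
pose y : 'cV[R]_n := \col_j (if j \in Cs then 1 else 0).
have Qy : Q *m y = 0 *: y.
  apply/matrixP => i k; rewrite (ord1 k) scale0r [RHS]mxE mxE.
  have -> : \sum_j Q i j * y j 0 = \sum_j (if i \in Cs then A i j - (i == j)%:R * y j 0 else (i == j)%:R * y j 0).
    apply: eq_bigr => j _; rewrite [Q i j]mxE [y j 0]mxE.
    case Ci: (i \in Cs); case Cj: (j \in Cs); rewrite ?mulr1 ?mulr0 //.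
    by rewrite CA ?Cj ?subr0.
  case Ci: (i \in Cs).
    rewrite sumrB.
    have -> : \sum_j (i == j)%:R * y j 0 = y i 0.
      by rewrite (bigD1 i) //= eqxx mul1r big1 ?addr0 // => j /negPf; rewrite eq_sym => ->; rewrite mul0r.
    have -> : \sum_j A i j = 1.
      rewrite -(HS i) -[RHS]mul1r -(CL _ Ci) mulr_sumr; apply: eq_bigr => j _; by rewrite diagM.
    by rewrite !mxE Ci subrr.
  rewrite (bigD1 i) //= eqxx mul1r big1 ?addr0; first by rewrite /y mxE Ci.
  by move=> j /negPf; rewrite eq_sym => ->; rewrite mul0r.
have y0 : y != 0.
  apply/eqP => /matrixP /(_ i0 0); rewrite !mxE inE connect0 => /eqP; by rewrite oner_eq0.
have /eigenvalueP [w Hw w0] := right_eigen Qy y0.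
rewrite scale0r in Hw.
have wC : forall j, j \notin Cs -> w 0 j = 0.
  move=> j Cj; move/matrixP: Hw => /(_ 0 j); rewrite !mxE => <-.
  rewrite -[LHS]sum_delta; apply: eq_bigr => i _; rewrite mxE.
  case Ci: (i \in Cs) => //; rewrite CA ?Cj // sub0r (_ : (i == j) = false) ?oppr0 //.
  by apply/eqP => E; rewrite -E Ci in Cj.
exists w => //; apply/matrixP => k j; rewrite (ord1 k).
move/matrixP: Hw => /(_ 0 j); rewrite !mxE => Hs.
apply/eqP; rewrite -subr_eq0; apply/eqP; rewrite -[X in _ - X]sum_delta -sumrB -[RHS]Hs.
apply: eq_bigr => i _; rewrite [Q i j]mxE -mulrBr.
case Ci: (i \in Cs) => //; by rewrite wC ?Ci // !mul0r.
Qed.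

End NotReach.


Section Conv.
Variable R : realType.
Local Notation one N := (const_mx 1 : 'cV[R]_N).

Lemma bnd_mul N (P : 'M[R]_N) (x : 'cV[R]_N) c : nnm P ->
  (forall i, `|x i 0| <= c) -> forall i, `|(P *m x) i 0| <= c * (P *m one N) i 0.
Proof.
move=> HP Hx i; rewrite !mxE mulr_sumr; apply: (le_trans (ler_norm_sum _ _ _)).
apply: ler_sum => j _; rewrite normrM (ger0_norm (HP i j)) mxE mulr1 mulrC.
by apply: ler_wpM2r.
Qed.

Lemma conv_gen N (M : 'M[R]_N) (e : nat -> 'cV[R]_N) K :
  nnm M -> (forall i, (M *m one N) i 0 <= 1) ->
  (forall i, (M ^+ K *m one N) i 0 < 1) ->
  (forall k, e k.+1 = M *m e k) -> forall i, (fun k => e k i 0) @ \oo --> 0.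
Proof.
move=> HM H1 HK He i.
have [i1 Hi1] := @exists_max _ _ i (fun j => (M ^+ K *m one N) j 0).
set rho := (M ^+ K *m one N) i1 0 in Hi1.
have rho_ge0 : 0 <= rho by rewrite /rho mxE sumr_ge0 // => j _; rewrite mxE mulr1 (nnm_exp K HM).
have rho_lt1 : rho < 1 by apply: HK.
have [i2 Hi2] := @exists_max _ _ i (fun j => `|e 0%N j 0|).
set c0 := `|e 0%N i2 0| in Hi2.
have c0_ge0 : 0 <= c0 by rewrite /c0 normr_ge0.
have eD : forall k m, e (m + k)%N = M ^+ m *m e k.
  move=> k; elim => [|m IH]; first by rewrite add0n expr0 mul1mx.
  by rewrite addSn He IH exprS -mulmxE mulmxA.
have step : forall (c : R) (x : 'cV[R]_N), 0 <= c -> (forall j, `|x j 0| <= c) -> forall j, `|(M *m x) j 0| <= c.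
  move=> c x c0' Hx j; apply: le_trans (bnd_mul HM Hx j) _.
  by apply: ler_piMr.
have HmK : forall m j, `|e (m * K)%N j 0| <= rho ^+ m * c0.
  elim => [|m IH] j; first by rewrite mul0n expr0 mul1r.
  rewrite mulSn eD; apply: le_trans (bnd_mul (nnm_exp K HM) IH j) _.
  rewrite exprSr mulrAC; apply: ler_wpM2r => //; apply: ler_wpM2l; first by rewrite exprn_ge0.
  exact: Hi1.
have Hk : forall m k, (m * K <= k)%N -> forall j, `|e k j 0| <= rho ^+ m * c0.
  move=> m k Hmk; rewrite -(subnK Hmk); elim: (k - m * K)%N => [|d IH] j.
    by rewrite add0n.
  by rewrite addSn He; apply: step => //; rewrite mulr_ge0 // exprn_ge0.
apply/cvgrPdist_le => eps eps0.
have Hrho : `|rho| < 1 by rewrite ger0_norm.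
have := cvg_expr Hrho; move/cvgrPdist_le => /(_ (eps / (c0 + 1))).
rewrite divr_gt0 // ?ltr_wpDl // => /(_ isT) [m0 _ Hm0].
have Hm : rho ^+ m0 * c0 <= eps.
  have := Hm0 m0 (leqnn _); rewrite sub0r normrN ger0_norm ?exprn_ge0 // => Hr.
  apply: (le_trans (ler_wpM2r c0_ge0 Hr)).
  rewrite mulrAC ler_pdivrMr ?ltr_wpDl //; apply: ler_wpM2l; [exact: ltW | by rewrite lerDl].
near=> k.
rewrite sub0r normrN; apply: le_trans (Hk m0 k _ i) Hm.
near: k; exact: nbhs_infty_ge.
Unshelve. all: by end_near.
Qed.

End Conv.


Section FJ.
Variable R : realType.
Local Notation one N := (const_mx 1 : 'cV[R]_N).
Variables (n : nat) (Lam W1 W2 : 'M[R]_n).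
Hypothesis HD : is_diag_mx Lam.
Hypothesis HL : forall i, 0 <= Lam i i <= 1.
Hypothesis HW1 : forall i j, 0 <= W1 i j.
Hypothesis HW2 : forall i j, 0 <= W2 i j.
Hypothesis HS : forall i, \sum_j (W1 + W2) i j = 1.
Local Notation A := (Lam *m (W1 + W2)).
Local Notation Ad := (FJMM_mx Lam W1 W2).

Lemma HW : forall i j, 0 <= (W1 + W2) i j.
Proof. by move=> i j; rewrite mxE addr_ge0. Qed.

Definition vle N (x y : 'cV[R]_N) := forall i, x i 0 <= y i 0.

Lemma mono N (M : 'M[R]_N) x y : nnm M -> vle x y -> vle (M *m x) (M *m y).
Proof.
move=> HM Hxy i; rewrite !mxE; apply: ler_sum => j _; exact: ler_wpM2l.
Qed.

Lemma vle_col (a b c d : 'cV[R]_n) : vle a c -> vle b d -> vle (col_mx a b) (col_mx c d).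
Proof.
by move=> H1 H2 i; case: (split_ordP i) => j ->; rewrite ?col_mxEu ?col_mxEd.
Qed.

Lemma vle_trans N (x y z : 'cV[R]_N) : vle x y -> vle y z -> vle x z.
Proof. by move=> H1 H2 i; apply: le_trans (H1 i) (H2 i). Qed.

Lemma LW_nn (W : 'M[R]_n) : (forall i j, 0 <= W i j) -> nnm (Lam *m W).
Proof. by move=> H i j; rewrite diagM // mulr_ge0 //; case/andP: (HL i). Qed.

Lemma Ad_nn : nnm Ad.
Proof.
move=> i j; rewrite /FJMM_mx.
case: (split_ordP i) => i1 ->; case: (split_ordP j) => j1 ->;
  rewrite ?block_mxEul ?block_mxEur ?block_mxEdl ?block_mxEdr.
- by rewrite mxE.
- by rewrite mxE ler0n.
- exact: LW_nn.
- exact: LW_nn.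
Qed.

Lemma Ad_col (a b : 'cV[R]_n) :
  Ad *m col_mx a b = col_mx b (Lam *m W2 *m a + Lam *m W1 *m b).
Proof. by rewrite /FJMM_mx mul_block_col !mul0mx mul1mx add0r. Qed.

Lemma AW (q : 'cV[R]_n) : Lam *m W2 *m q + Lam *m W1 *m q = A *m q.
Proof. by rewrite -mulmxDl -mulmxDr addrC. Qed.

Lemma one_col : one (n + n) = col_mx (one n) (one n).
Proof. by rewrite col_mx_const. Qed.

Lemma Ad_one i : (Ad *m one (n + n)) i 0 <= 1.
Proof.
rewrite one_col Ad_col AW.
case: (split_ordP i) => j ->; rewrite ?col_mxEu ?col_mxEd; first by rewrite mxE.
have := u_bnd HD HL HW HS 1 j; rewrite /u expr1 => /andP [_ ->] //.
Qed.

Lemma u_dec k : vle (u Lam (W1 + W2) k.+1) (u Lam (W1 + W2) k).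
Proof.
elim: k => [|k IH] i.
  have /andP [_ H] := u_bnd HD HL HW HS 1 i; apply: le_trans H _; by rewrite /u expr0 mul1mx mxE.
have HH := (mono (A_nn HD HL HW) IH i); rewrite (uS _ _ k.+1) (uS _ _ k); by rewrite uS in HH.
Qed.

Lemma Ad2 (q : 'cV[R]_n) : vle (A *m q) q ->
  vle (Ad ^+ 2 *m col_mx q q) (col_mx (A *m q) (A *m q)).
Proof.
move=> Hq; rewrite expr2 -mulmxE -mulmxA !Ad_col AW.
apply: vle_col => // i.
apply: (@le_trans _ _ ((Lam *m W2 *m q + Lam *m W1 *m q) i 0)); last by rewrite AW.
rewrite [X in X <= _]mxE [X in _ <= X]mxE lerD2l.
exact: (mono (LW_nn HW1) Hq).
Qed.

Lemma Ad_pow k : vle (Ad ^+ (2 * k) *m one (n + n))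
  (col_mx (u Lam (W1 + W2) k) (u Lam (W1 + W2) k)).
Proof.
elim: k => [|k IH].
  by move=> i; rewrite muln0 expr0 mul1mx /u expr0 mul1mx one_col.
rewrite mulnS exprD -mulmxE -mulmxA.
apply: vle_trans (mono (nnm_exp 2 Ad_nn) IH) _.
rewrite uS; apply: Ad2; rewrite -uS; exact: u_dec.
Qed.

Lemma Ad_lt K : (forall i, u Lam (W1 + W2) K i 0 < 1) ->
  forall i, (Ad ^+ (2 * K) *m one (n + n)) i 0 < 1.
Proof.
move=> HK i; apply: le_lt_trans (Ad_pow K i) _.
by case: (split_ordP i) => j ->; rewrite ?col_mxEu ?col_mxEd.
Qed.

Lemma Ad_eig (q : 'rV[R]_n) : q *m A = q -> q != 0 -> eigenvalue Ad 1.
Proof.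
move=> Hq q0; apply/eigenvalueP; exists (row_mx (q *m (Lam *m W2)) q).
  rewrite scale1r /FJMM_mx mul_row_block !mulmx0 add0r mulmx1 -mulmxDr.
  have -> : Lam *m W2 + Lam *m W1 = A by rewrite -mulmxDr addrC.
  by rewrite Hq.
by rewrite row_mx_eq0 negb_and q0 orbT.
Qed.

End FJ.

Unset Implicit Arguments.
Set Strict Implicit.
Set Printing Implicit Defensive.

Lemma zmod_id (V : zmodType) (a b c d u : V) :
  (a + b + u) - (c + d + u) = (b - d) + (a - c).
Proof.
by rewrite opprD addrACA subrr addr0 opprD addrACA addrC.
Qed.

Lemma stepA (R : realType) (n : nat) (a1 a2 : 'M[R]_n) (p q r xb v : 'cV[R]_n) :
  xb = a1 *m xb + a2 *m xb + v -> p = a1 *m q + a2 *m r + v ->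
  p - xb = a2 *m (r - xb) + a1 *m (q - xb).
Proof. by move=> Hx Hp; rewrite Hp {1}Hx !mulmxBr zmod_id. Qed.

Theorem theorem1 (R : realType) (n : nat) (Lam W1 W2 : 'M[R]_n) (s : 'cV[R]_n) :
  (0 < n)%N ->
  is_diag_mx Lam ->
  (forall i, 0 <= Lam i i <= 1) ->
  nonneg_mx W1 -> nonneg_mx W2 ->
  row_stochastic (W1 + W2) ->
  let Abar := Lam *m (W1 + W2) in
  let u := (1%:M - Lam) *m s in
  let xbar := invmx (1%:M - Abar) *m u in
  ((spectral_radius_lt1 (FJMM_mx Lam W1 W2) <-> spectral_radius_lt1 Abar) /\
   (spectral_radius_lt1 Abar <->
      ((exists i, Lam i i < 1) /\
       globally_reachable (W1 + W2) (fun i => Lam i i < 1)))) /\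
  (spectral_radius_lt1 Abar ->
     (1%:M - Abar) \in unitmx /\
     (* every solution of (A); y k = x(k-1), so y 0 = x(-1), y 1 = x(0) *)
     (forall y : nat -> 'cV[R]_n,
        (forall k, y k.+2 = Lam *m (W1 *m y k.+1 + W2 *m y k) + u) ->
        forall i, (fun k => y k i ord0) @ \oo --> xbar i ord0) /\
     (* every solution of (B) *)
     (forall x : nat -> 'cV[R]_n,
        (forall k, x k.+1 = Abar *m x k + u) ->
        forall i, (fun k => x k i ord0) @ \oo --> xbar i ord0) /\
     (* xbar is the unique equilibrium of (A) *)
     (forall z : 'cV[R]_n, z = Lam *m (W1 *m z + W2 *m z) + u <-> z = xbar) /\
     (* xbar is the unique equilibrium of (B) *)
     (forall z : 'cV[R]_n, z = Abar *m z + u <-> z = xbar)).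
Proof.
move=> n0 HD HL HW1 HW2 [HWs HS] Abar uu xbar.
have HWs' : forall i j, 0 <= (W1 + W2) i j by exact: HWs.
have toC1 : complex.real_complex R 1 = 1 by rewrite rmorph1.
have key1 : spectral_radius_lt1 Abar <-> globally_reachable (W1 + W2) (fun i => Lam i i < 1).
  split.
  - move=> Hsp; case: (pselect (globally_reachable (W1 + W2) (fun i => Lam i i < 1))) => // NG.
    have [q Hq q0] := not_reach HD HL HWs' HS NG.
    have : eigenvalue Abar 1 by apply/eigenvalueP; exists q; rewrite ?scale1r.
    by move/eigen_complexify/Hsp; rewrite toC1 normr1 ltxx.
  - move=> HG; have [K HK] := reach_u HD HL HWs' HS HG.
    by apply: contr (A_nn HD HL HWs') _; exists K.
have key2 : spectral_radius_lt1 (FJMM_mx Lam W1 W2) <-> globally_reachable (W1 + W2) (fun i => Lam i i < 1).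
  split.
  - move=> Hsp; case: (pselect (globally_reachable (W1 + W2) (fun i => Lam i i < 1))) => // NG.
    have [q Hq q0] := not_reach HD HL HWs' HS NG.
    have := Ad_eig Hq q0.
    by move/eigen_complexify/Hsp; rewrite toC1 normr1 ltxx.
  - move=> HG; have [K HK] := reach_u HD HL HWs' HS HG.
    apply: contr (Ad_nn HD HL HW1 HW2) _; exists (2 * K)%N.
    exact: (Ad_lt HD HL HW1 HW2 HS HK).
have exS : globally_reachable (W1 + W2) (fun i => Lam i i < 1) -> exists i, Lam i i < 1.
  by move=> HG; have [j Hj _] := HG (Ordinal n0); exists j.
split.
  split; first by rewrite key2 key1.
  split; [move/key1 => HG; split => //; exact: exS | by case => _ /key1].
move=> Hsp; have HG := (proj1 key1 Hsp).
have [K HK] := reach_u HD HL HWs' HS HG.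
have U : (1%:M - Abar) \in unitmx.
  case Hu: ((1%:M - Abar) \in unitmx) => //; exfalso.
  have : eigenvalue Abar 1.
    rewrite eigenvalue_unitE (_ : Abar - 1%:M = (-1) *: (1%:M - Abar)).
      by rewrite unitmxZ ?Hu ?unitrN1.
    by rewrite scaleN1r opprB.
  by move/eigen_complexify/Hsp; rewrite toC1 normr1 ltxx.
have Hxb : (1%:M - Abar) *m xbar = uu by rewrite /xbar mulKVmx.
have Exb : xbar = Abar *m xbar + uu.
  by rewrite -Hxb mulmxBl mul1mx addrC subrK.
have eqB : forall z : 'cV[R]_n, z = Abar *m z + uu <-> z = xbar.
  move=> z; split; last by move->.
  move=> Hz; rewrite /xbar.
  have -> : uu = (1%:M - Abar) *m z by rewrite mulmxBl mul1mx {1}Hz addrC addKr.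
  by rewrite mulKmx.
have LW : forall z : 'cV[R]_n, Lam *m (W1 *m z + W2 *m z) = Abar *m z.
  by move=> z; rewrite -mulmxDl mulmxA.
have Aone : forall i, (Abar *m (const_mx 1 : 'cV[R]_n)) i 0 <= 1.
  move=> i; have /andP [_ H] := u_bnd HD HL HWs' HS 1 i; move: H; by rewrite /u expr1.
split => //; split; last split; last split.
- move=> y Hy i.
  pose E k := col_mx (y k - xbar) (y k.+1 - xbar).
  have HE : forall k, E k.+1 = FJMM_mx Lam W1 W2 *m E k.
    move=> k; rewrite /E Ad_col; congr col_mx.
    apply: stepA; last by rewrite Hy mulmxDr !mulmxA.
    rewrite [Lam *m W1 *m xbar + _]addrC (AW Lam W1 W2 xbar); exact: Exb.
  have := conv_gen (Ad_nn HD HL HW1 HW2) (Ad_one HD HL HW1 HW2 HS)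
     (Ad_lt HD HL HW1 HW2 HS HK) HE (lshift n i).
  move=> Hc; apply/subr_cvg0.
  have -> : (fun k => y k i ord0 - xbar i ord0) = (fun k => E k (lshift n i) 0).
    by apply: funext => k; rewrite /E col_mxEu !mxE.
  exact: Hc.
- move=> x Hx i.
  pose e k := x k - xbar.
  have He : forall k, e k.+1 = Abar *m e k.
    move=> k; rewrite /e Hx {1}Exb mulmxBr.
    by rewrite opprD addrACA subrr addr0.
  have Hc := conv_gen (A_nn HD HL HWs') Aone HK He i.
  apply/subr_cvg0.
  have -> : (fun k => x k i ord0 - xbar i ord0) = (fun k => e k i 0).
    by apply: funext => k; rewrite /e !mxE.
  exact: Hc.
- by move=> z; rewrite LW.
- exact: eqB.
Qed.
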